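(* Fix $\rho>0$ and $\nu\in(0,1)$. (I) For $\lambda_1\ge0$, $\lambda_3>0$ and $x\in[0,1]$ define $F_U(\lambda_1,\lambda_3;x):=1+\lambda_3\big(1-\exp\big(\tfrac{\lambda_1}{\lambda_3}(x-\nu)+\rho\big)\big)$. Fix $0<t_{\min}\le t_{\max}$ and suppose $t:=\lambda_1/\lambda_3\in[t_{\min},t_{\max}]$. If $0\le\lambda_3<\frac{1}{e^{\rho+t(1-\nu)}-1}$, then $F_U(\lambda_1,\lambda_3;x)>0$ for all $x\in[0,1]$. Moreover, for each fixed $x$, $(\lambda_1,\lambda_3)\mapsto F_U(\lambda_1,\lambda_3;x)$ is concave on $\{\lambda_3>0\}$; hence $g_U:=\log F_U$ is exp-concave on any compact subset of $\{\lambda_3>0\}$ on which $F_U>0$. (II) For $\beta>0$, $\gamma\ge0$, set $A(\beta,\nu):=e^{-\rho+\beta\nu}$ and $F_L(\gamma;\beta,\nu,x):=1+\gamma(e^{\beta x}-A(\beta,\nu))$, $x\in[0,1]$. Then $\gamma\mapsto F_L(\gamma;\beta,\nu,x)$ is affine, and $\min_{x\in[0,1]}F_L(\gamma;\beta,\nu,x)=1+\gamma(1-A(\beta,\nu))$. Consequently: if $A(\beta,\nu)\le1$ then $F_L(\gamma;\beta,\nu,x)\ge1$ for all $\gamma\ge0$, $x\in[0,1]$; if $A(\beta,\nu)>1$ then $F_L(\gamma;\beta,\nu,x)>0$ for all $x\in[0,1]$ whenever $0\le\gamma<\frac{1}{A(\beta,\nu)-1}$. On any compact interval of $\gamma$ on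 which $F_L>0$, $g_L:=\log F_L$ is exp-concave.
   Context: A function $g$ on a convex set is exp-concave if $e^{g}$ is concave there. *)

(* Defs.v *)
From mathcomp Require Import all_boot all_order all_algebra.
From mathcomp Require Import all_classical all_reals all_analysis.
Set Implicit Arguments. Unset Strict Implicit. Unset Printing Implicit Defensive.
Import Order.TTheory GRing.Theory Num.Theory.
Local Open Scope classical_set_scope.
Local Open Scope ring_scope.

Section defs.
Variable R : realType.

Definition convex_set1 (D : set R) : Prop :=
  forall x y t, D x -> D y -> 0 <= t <= 1 -> D (t * x + (1 - t) * y).

Definition convex_set2 (D : set (R * R)) : Prop :=
  forall p q t, D p -> D q -> 0 <= t <= 1 ->
    D (t * p.1 + (1 - t) * q.1, t * p.2 + (1 - t) * q.2).

Definition concave_on1 (D : set R) (f : R -> R) : Prop :=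
  forall x y t, D x -> D y -> 0 <= t <= 1 ->
    t * f x + (1 - t) * f y <= f (t * x + (1 - t) * y).

Definition concave_on2 (D : set (R * R)) (f : R * R -> R) : Prop :=
  forall p q t, D p -> D q -> 0 <= t <= 1 ->
    t * f p + (1 - t) * f q <=
      f (t * p.1 + (1 - t) * q.1, t * p.2 + (1 - t) * q.2).

Definition exp_concave_on1 (D : set R) (g : R -> R) : Prop :=
  convex_set1 D /\ concave_on1 D (fun x => expR (g x)).

Definition exp_concave_on2 (D : set (R * R)) (g : R * R -> R) : Prop :=
  convex_set2 D /\ concave_on2 D (fun p => expR (g p)).

Definition F_U (rho nu l1 l3 x : R) : R :=
  1 + l3 * (1 - expR (l1 / l3 * (x - nu) + rho)).

Definition A_L (rho beta nu : R) : R := expR (- rho + beta * nu).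

Definition F_L (rho gamma beta nu x : R) : R :=
  1 + gamma * (expR (beta * x) - A_L rho beta nu).

End defs.

(* Main.v *)
Require Import Defs.
From mathcomp Require Import all_boot all_order all_algebra.
From mathcomp Require Import all_classical all_reals all_analysis.
From mathcomp Require Import ring lra.
Import Order.TTheory GRing.Theory Num.Theory.
Local Open Scope classical_set_scope.
Local Open Scope ring_scope.

Lemma tangent (R : realType) (m u : R) : expR m * (1 + (u - m)) <= expR u.
Proof.
have -> : expR u = expR m * expR (u - m) by rewrite -expRD; congr expR; ring.
by rewrite ler_wpM2l ?expR_ge1Dx // ltW // expR_gt0.
Qed.

Lemma persp (R : realType) (c rho a1 a3 b1 b3 t : R) : 0 < a3 -> 0 < b3 -> 0 <= t <= 1 ->
  (t*a3+(1-t)*b3) * expR ((t*a1+(1-t)*b1)/(t*a3+(1-t)*b3) * c + rho)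
  <= t*a3*expR(a1/a3*c+rho) + (1-t)*b3*expR(b1/b3*c+rho).
Proof.
move=> ha hb /andP[t0 t1].
set s := t*a3+(1-t)*b3.
have sp : 0 < s by rewrite /s; nra.
set m := _ + rho; set u := a1/a3*c+rho; set v := b1/b3*c+rho.
have hu := @tangent R m u; have hv := @tangent R m v.
have e1 : t*a3*(expR m * (1 + (u - m))) <= t*a3*expR u by rewrite ler_wpM2l //; nra.
have e2 : (1-t)*b3*(expR m * (1 + (v - m))) <= (1-t)*b3*expR v by rewrite ler_wpM2l //; nra.
have id : t*a3*(u - m) + (1-t)*b3*(v-m) = 0.
  rewrite /u /v /m /s; field; rewrite !gt_eqF //. 
have : s * expR m = t*a3*(expR m * (1 + (u - m))) + (1-t)*b3*(expR m * (1 + (v - m))).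
  have -> : t*a3*(expR m * (1 + (u - m))) + (1-t)*b3*(expR m * (1 + (v - m)))
     = expR m * (s + (t*a3*(u - m) + (1-t)*b3*(v-m))) by rewrite /s; ring.
  by rewrite id addr0 mulrC.
move=> ->; lra.
Qed.
Theorem mainTheorem14 (R : realType) (rho nu : R) :
  0 < rho -> 0 < nu < 1 ->
  (* (I) positivity *)
  (forall (tmin tmax l1 l3 : R),
     0 < tmin -> tmin <= tmax ->
     0 <= l1 -> 0 < l3 ->
     tmin <= l1 / l3 <= tmax ->
     0 <= l3 < (expR (rho + l1 / l3 * (1 - nu)) - 1)^-1 ->
     forall x : R, 0 <= x <= 1 -> 0 < F_U rho nu l1 l3 x) /\
  (* (I) concavity of (l1, l3) |-> F_U on {l3 > 0} *)
  (forall x : R, 0 <= x <= 1 ->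
     concave_on2 [set p : R * R | 0 < p.2] (fun p => F_U rho nu p.1 p.2 x)) /\
  (* (I) exp-concavity of g_U = log F_U *)
  (forall x : R, 0 <= x <= 1 ->
     forall K : set (R * R),
       K `<=` [set p : R * R | 0 < p.2] -> compact (K : set (R^o * R^o)%type) -> convex_set2 K ->
       (forall p, K p -> 0 < F_U rho nu p.1 p.2 x) ->
       exp_concave_on2 K (fun p => ln (F_U rho nu p.1 p.2 x))) /\
  (* (II) *)
  (forall beta : R, 0 < beta ->
     (* affine in gamma *)
     (forall x : R, 0 <= x <= 1 ->
        exists a b : R, forall gamma : R, F_L rho gamma beta nu x = a + b * gamma) /\
     (* minimum over x in [0,1] *)
     (forall gamma : R, 0 <= gamma ->
        (forall x : R, 0 <= x <= 1 ->
           1 + gamma * (1 - A_L rho beta nu) <= F_L rho gamma beta nu x) /\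
        (exists2 x : R, 0 <= x <= 1 &
           F_L rho gamma beta nu x = 1 + gamma * (1 - A_L rho beta nu))) /\
     (A_L rho beta nu <= 1 ->
        forall gamma x : R, 0 <= gamma -> 0 <= x <= 1 ->
          1 <= F_L rho gamma beta nu x) /\
     (1 < A_L rho beta nu ->
        forall gamma : R, 0 <= gamma < (A_L rho beta nu - 1)^-1 ->
          forall x : R, 0 <= x <= 1 -> 0 < F_L rho gamma beta nu x) /\
     (forall x : R, 0 <= x <= 1 ->
        forall a b : R, 0 <= a -> a <= b ->
          (forall gamma, a <= gamma <= b -> 0 < F_L rho gamma beta nu x) ->
          exp_concave_on1 [set gamma : R | a <= gamma <= b]
            (fun gamma => ln (F_L rho gamma beta nu x)))).
Proof.
move=> rho0 /andP[nu0 nu1].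
have conc : forall x : R, 0 <= x <= 1 ->
     concave_on2 [set p : R * R | 0 < p.2] (fun p => F_U rho nu p.1 p.2 x).
  move=> x _ [a1 a3] [b1 b3] t /= ha hb ht.
  have := @persp R (x - nu) rho a1 a3 b1 b3 t ha hb ht.
  rewrite /F_U /=.
  set eu := expR (a1 / a3 * _ + _); set ev := expR (b1 / b3 * _ + _).
  set em := expR (_ / _ * _ + _); set s := t * a3 + (1 - t) * b3.
  move=> H; rewrite -subr_ge0.
  have -> : 1 + s * (1 - em) - (t * (1 + a3 * (1 - eu)) + (1 - t) * (1 + b3 * (1 - ev)))
    = t * a3 * eu + (1 - t) * b3 * ev - s * em by rewrite /s; ring.
  by rewrite subr_ge0.
split.
  move=> tmin tmax l1 l3 tmin0 _ l10 l30 /andP[ht _] /andP[_ hl] x /andP[x0 x1].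
  set E := expR (rho + l1 / l3 * (1 - nu)).
  have t0 : 0 <= l1 / l3 by rewrite divr_ge0 // ltW.
  have E1 : 1 < E.
    rewrite /E -[X in X < _]expR0 ltr_expR.
    have : 0 <= 1 - nu by lra.
    move=> h; have := mulr_ge0 t0 h; lra.
  have hE : expR (l1 / l3 * (x - nu) + rho) <= E.
    rewrite /E ler_expR.
    have : 0 <= 1 - x by lra.
    move=> h; have := mulr_ge0 t0 h.
    have -> : l1 / l3 * (1 - x) = l1 / l3 * (1 - nu) - l1 / l3 * (x - nu) by ring.
    lra.
  have : l3 * (E - 1) < 1.
    by rewrite -ltr_pdivlMr ?subr_gt0 // div1r.
  rewrite /F_U; nra.
split; first exact: conc.
split.
  move=> x hx K HK _ cK Fp; split => //.
  move=> p q t Kp Kq ht /=.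
  have Km := cK p q t Kp Kq ht.
  rewrite !lnK ?posrE; [| exact: (Fp _ Km) | exact: (Fp _ Kq) | exact: (Fp _ Kp)].
  exact: (conc x hx p q t (HK _ Kp) (HK _ Kq) ht).
move=> beta beta0.
have eb : forall x, 0 <= x -> 1 <= expR (beta * x).
  by move=> x x0; rewrite -expR0 ler_expR; nra.
have mn : forall gamma : R, 0 <= gamma ->
        (forall x : R, 0 <= x <= 1 ->
           1 + gamma * (1 - A_L rho beta nu) <= F_L rho gamma beta nu x).
  move=> g g0 x /andP[x0 _]; have := eb x x0; rewrite /F_L; nra.
split.
  move=> x _; exists 1, (expR (beta * x) - A_L rho beta nu) => g; rewrite /F_L; ring.
split.
  move=> g g0; split; first exact: mn.
  by exists 0; [rewrite lexx ler01 | rewrite /F_L mulr0 expR0].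
split.
  move=> hA g x g0 hx; have := mn g g0 x hx; nra.
split.
  move=> hA g /andP[g0 hg] x hx; have := mn g g0 x hx.
  have : g * (A_L rho beta nu - 1) < 1.
    by rewrite -ltr_pdivlMr ?subr_gt0 // div1r.
  nra.
move=> x hx a b a0 ab Fp; split.
  move=> y z t /= /andP[ay yb] /andP[az zb] /andP[t0 t1]; apply/andP; split; nra.
move=> y z t /= hy hz /andP[t0 t1].
have hm : a <= t * y + (1 - t) * z <= b.
  move: hy hz => /andP[ay yb] /andP[az zb]; apply/andP; split; nra.
rewrite !lnK ?posrE; [| exact: (Fp _ hm) | exact: (Fp _ hz) | exact: (Fp _ hy)].
rewrite /F_L le_eqVlt; apply/orP; left; apply/eqP; ring.
Qed.
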